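(* Let $n_1,n_2\ge 1$ be integers, $n=n_1+n_2$, and consider a uniformly random arrangement of $n_1$ symbols $x$ and $n_2$ symbols $y$ (all $\binom{n}{n_1}$ arrangements equally likely). Let $R_1$ and $R_2$ be the numbers of runs of $x$'s and of $y$'s, respectively, and $R_M=\max(R_1,R_2)$. Then $$E(R_M)=2+\frac{n(n_1-1)(n_2-1)-2n_1n_2}{n(n-1)},$$ $$\mathrm{Var}(R_M)=\frac{n_1n_2\left[n_1^3+n_2^3+n_1^3n_2+n_1n_2^3-n_1^2-n_2^2+2n_1^2n_2^2-5n_1^2n_2-5n_1n_2^2+6n_1n_2\right]}{n^2(n-1)^2(n-2)}.$$
   Context: A run is a maximal block of consecutive identical symbols in the arrangement. *)

(* Defs.v *)
From HB Require Import structures.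
From mathcomp Require Import all_boot all_order all_algebra.
Set Implicit Arguments. Unset Strict Implicit. Unset Printing Implicit Defensive.
Import Order.TTheory GRing.Theory Num.Theory.

(* Symbol x is encoded as [true], symbol y as [false]. *)

(* A run of b's is counted at its first position. *)
Fixpoint runs_from (b : bool) (prev : option bool) (s : seq bool) : nat :=
  match s with
  | [::] => 0
  | c :: s' => ((c == b) && (prev != Some b)) + runs_from b (Some c) s'
  end.

Definition runs (b : bool) (s : seq bool) : nat := runs_from b None s.

Definition RM (s : seq bool) : nat := maxn (runs true s) (runs false s).

Definition arrangements (n1 n2 : nat) : {set (n1 + n2).-tuple bool} :=
  [set t : (n1 + n2).-tuple bool | count id t == n1].

Definition E_unif (n1 n2 : nat) (X : seq bool -> nat) : rat :=
  (\sum_(t in arrangements n1 n2) (X t)%:R) / (#|arrangements n1 n2|)%:R.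

Definition Var_unif (n1 n2 : nat) (X : seq bool -> nat) : rat :=
  E_unif n1 n2 (fun s => X s ^ 2) - (E_unif n1 n2 X) ^+ 2.

(* Main.v *)
Require Import Defs.
From mathcomp Require Import all_boot all_order all_algebra.
From mathcomp Require Import ring lra zify.
Import Order.TTheory GRing.Theory Num.Theory.
Local Open Scope ring_scope.

Fixpoint ch (c : bool) (s : seq bool) : nat :=
  if s is d :: s' then ((d != c) + ch d s')%N else 0%N.

Fixpoint arr (n a : nat) : seq (seq bool) :=
  match n with
  | 0 => if a == 0%N then [:: [::]] else [::]
  | n'.+1 => (if a is a'.+1 then map (cons true) (arr n' a') else [::])
               ++ map (cons false) (arr n' a)
  end.

Lemma runs_ch s c :
  runs_from c (Some c) s = (ch c s)./2 /\ runs_from (~~c) (Some c) s = uphalf (ch c s).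
Proof.
elim: s c => [|d s IH] c //=.
have [IHt IHf] := IH true; have [IHt' IHf'] := IH false.
by case: c; case: d => /=; rewrite ?IHt ?IHf ?IHt' ?IHf' /= ?add0n ?add1n.
Qed.

Lemma RM_cons d s : RM (d :: s) = ((ch d s)./2).+1.
Proof.
have [Hd Hnd] := runs_ch s d.
rewrite /RM /runs /=.
case: d Hd Hnd => /= Hd Hnd; rewrite Hd Hnd /= ?add1n ?add0n uphalf_half;
  idtac.
all: case: (odd _) => /=; rewrite ?add0n ?add1n; lia.
Qed.


Lemma nil_notin_map x (L : seq (seq bool)) : ([::] \in map (cons x) L) = false.
Proof. by apply/mapP => -[]. Qed.

Lemma cons_in_map x d s (L : seq (seq bool)) :
  (d :: s \in map (cons x) L) = (d == x) && (s \in L).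
Proof.
by apply/mapP/andP => [[t Ht [-> ->]] | [/eqP -> Hs]]; [ | exists s].
Qed.

Lemma mem_arr n a s : (s \in arr n a) = (size s == n) && (count id s == a).
Proof.
elim: n a s => [|n IH] a s /=.
  by case: a; case: s.
rewrite mem_cat; case: s => [|d s] /=.
  by case: a => [|a]; rewrite ?nil_notin_map.
case: a => [|a]; rewrite ?cons_in_map ?IH; case: d => //=; by rewrite ?add1n ?orbF ?andbF.
Qed.

Lemma uniq_arr n a : uniq (arr n a).
Proof.
elim: n a => [|n IH] [|a] //=; rewrite ?cat_uniq ?map_inj_uniq //; try by move=> x y [].
rewrite !IH /= andbT; apply/hasP => -[x /mapP [y _ ->]].
by rewrite cons_in_map.
Qed.

Lemma arr_big n a : (n < a)%N -> arr n a = [::].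
Proof.
elim: n a => [|n IH] [|a] //= Ha.
by rewrite !IH // ltnW.
Qed.

Lemma sum_arr n1 n2 (F : seq bool -> rat) :
  \sum_(t in arrangements n1 n2) F t = \sum_(s <- arr (n1+n2) n1) F s.
Proof.
rewrite -big_enum /= -(big_map (fun t : (n1+n2).-tuple bool => val t) xpredT F).
apply: perm_big; apply: uniq_perm.
- rewrite map_inj_uniq ?enum_uniq //; exact: val_inj.
- exact: uniq_arr.
- move=> s; rewrite mem_arr; apply/mapP/andP => [[t] | [Hs Hc]].
  + by rewrite mem_enum inE => Ht ->; rewrite size_tuple.
  + by exists (Tuple Hs); rewrite ?mem_enum ?inE.
Qed.

Definition G (h : nat -> rat) c n a := \sum_(s <- arr n a) h (ch c s).

Definition L (x0 x1 x2 xO xK : rat) (k : nat) : rat :=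
  x0 + x1 * k%:R + x2 * k%:R ^+ 2 + xO * (odd k)%:R + xK * (k%:R * (odd k)%:R).

Definition h0 (k : nat) : rat := 1.
Definition h1 (k : nat) : rat := k%:R.
Definition h2 (k : nat) : rat := k%:R ^+ 2.
Definition hO (k : nat) : rat := (odd k)%:R.
Definition hK (k : nat) : rat := k%:R * (odd k)%:R.

Lemma G_L x0 x1 x2 xO xK c n a :
  G (L x0 x1 x2 xO xK) c n a =
  x0 * G h0 c n a + x1 * G h1 c n a + x2 * G h2 c n a + xO * G hO c n a
  + xK * G hK c n a.
Proof.
rewrite /G /L !big_split /= -!mulr_sumr; congr (_ + _ + _ + _ + _).
by rewrite mulr_sumr; apply: eq_bigr => i _; rewrite /h0 mulr1.
Qed.

Lemma G_ext h h' c n a : (forall k, h k = h' k) -> G h c n a = G h' c n a.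
Proof. by move=> E; apply: eq_bigr => i _; rewrite E. Qed.

Lemma G_rec h c n a :
  G h c n.+1 a = (if a is a'.+1 then G (fun k => h ((true != c) + k)%N) true n a' else 0)
                 + G (fun k => h ((false != c) + k)%N) false n a.
Proof.
rewrite /G /= big_cat /=; congr (_ + _); last by rewrite big_map.
by case: a => [|a]; rewrite ?big_nil // big_map.
Qed.

Lemma odd_bk (b : bool) k : (odd (b + k))%:R = b%:R + (odd k)%:R - 2 * b%:R * (odd k)%:R :> rat.
Proof. by case: b; case: (boolP (odd k)) => H; rewrite /= ?add0n ?add1n /= ?H /=; ring. Qed.

Lemma sh0 (b : bool) k : h0 (b + k) = L 1 0 0 0 0 k.
Proof. rewrite /h0 /L; ring. Qed.
Lemma sh1 (b : bool) k : h1 (b + k) = L b%:R 1 0 0 0 k.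
Proof. rewrite /h1 /L natrD; ring. Qed.
Lemma sh2 (b : bool) k : h2 (b + k) = L b%:R (2 * b%:R) 1 0 0 k.
Proof. rewrite /h2 /L natrD; case: b => /=; ring. Qed.
Lemma shO (b : bool) k : hO (b + k) = L b%:R 0 0 (1 - 2 * b%:R) 0 k.
Proof. rewrite /hO /L odd_bk; ring. Qed.
Lemma shK (b : bool) k : hK (b + k) = L b%:R b%:R 0 (- b%:R) (1 - 2 * b%:R) k.
Proof. rewrite /hK /L odd_bk natrD; case: b => /=; ring. Qed.

Lemma Gs0 (b : bool) c n a : G (fun k => h0 (b + k)%N) c n a = G h0 c n a.
Proof. by []. Qed.
Lemma Gs1 (b : bool) c n a :
  G (fun k => h1 (b + k)%N) c n a = b%:R * G h0 c n a + G h1 c n a.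
Proof. rewrite (@G_ext _ (L _ _ _ _ _) _ _ _ (sh1 b)) G_L; ring. Qed.
Lemma Gs2 (b : bool) c n a :
  G (fun k => h2 (b + k)%N) c n a = b%:R * G h0 c n a + 2 * b%:R * G h1 c n a + G h2 c n a.
Proof. rewrite (@G_ext _ (L _ _ _ _ _) _ _ _ (sh2 b)) G_L; ring. Qed.
Lemma GsO (b : bool) c n a :
  G (fun k => hO (b + k)%N) c n a = b%:R * G h0 c n a + (1 - 2 * b%:R) * G hO c n a.
Proof. rewrite (@G_ext _ (L _ _ _ _ _) _ _ _ (shO b)) G_L; ring. Qed.
Lemma GsK (b : bool) c n a :
  G (fun k => hK (b + k)%N) c n a = b%:R * G h0 c n a + b%:R * G h1 c n a
     - b%:R * G hO c n a + (1 - 2 * b%:R) * G hK c n a.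
Proof. rewrite (@G_ext _ (L _ _ _ _ _) _ _ _ (shK b)) G_L; ring. Qed.

Definition f1 (A B : rat) := (B + 2*A*B)/(A+B).
Definition f2 (A B : rat) := f1 A B + 2*A*B*(2*A*B + B - A - 1)/((A+B)*(A+B-1)).
Definition fO (A B : rat) := B/(A+B).
Definition fK (A B : rat) := fO A B + 2*A*B*(B-1)/((A+B)*(A+B-1)).
Definition fw (f : rat -> rat -> rat) (c : bool) (a b : nat) :=
  if c then f a%:R b%:R else f b%:R a%:R.

Definition Prop5 n a b c :=
  let N := 'C(n, a)%:R : rat in
  [/\ G h0 c n a = N, G h1 c n a = N * fw f1 c a b, G h2 c n a = N * fw f2 c a b,
      G hO c n a = N * fw fO c a b & G hK c n a = N * fw fK c a b].

Ltac nz := rewrite ?andbT; repeat (match goal with |- is_true (_ && _) => apply/andP; split end); try done; apply: lt0r_neq0; lra.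

Lemma G_big h c n a : (n < a)%N -> G h c n a = 0.
Proof. by move=> H; rewrite /G arr_big // big_nil. Qed.

Lemma closed n : forall a b c, (a + b)%N = n -> Prop5 n a b c.
Proof.
elim: n => [|n IH] a b c Hab.
  case: a b Hab => [|a] [|b] // _.
  rewrite /Prop5 /G /=; rewrite !big_cons !big_nil.
  by case: c; split; apply/eqP; vm_compute.
case: n IH Hab => [|[|n]] IH Hab.
- case: a b Hab => [|[|a]] [|[|b]] // _;
  rewrite /Prop5 /G /=; rewrite !big_cons !big_nil;
  by case: c; split; apply/eqP; vm_compute.
- case: a b Hab => [|[|[|a]]] [|[|[|b]]] // _;
  rewrite /Prop5 /G /=; rewrite ?big_cons ?big_nil;
  by case: c; split; apply/eqP; vm_compute.
case: a b Hab => [|a] [|b] Hab.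
- by [].
-
  have [I0 I1 I2 IO IK] := IH 0%N b false ltac:(lia).
  rewrite /Prop5 !(G_rec _ _ n.+2) Gs0 Gs1 Gs2 GsO GsK I0 I1 I2 IO IK !add0r !bin0.
  have -> : b = n.+2 by lia.
  rewrite /fw /f2 /fK /f1 /fO.
  have Hn : 0 <= n%:R :> rat by apply: ler0n.
    by case: c => /=; split; rewrite -?natr1; field; nz.
-
  have [I0 I1 I2 IO IK] := IH a 0%N true ltac:(lia).
  have Ea : a = n.+2 by lia.
  have Z : forall h, G h false n.+2 a.+1 = 0 by move=> h; apply: G_big; lia.
  rewrite /Prop5 !(G_rec _ _ n.+2) Gs0 Gs1 Gs2 GsO GsK I0 I1 I2 IO IK !Z Ea.
  rewrite !addr0 !binn.
  rewrite /fw /f2 /fK /f1 /fO.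
  have Hn : 0 <= n%:R :> rat by apply: ler0n.
  by case: c => /=; split; rewrite -?natr1; field; nz.
- have [I0 I1 I2 IO IK] := IH a b.+1 true ltac:(lia).
  have [J0 J1 J2 JO JK] := IH a.+1 b false ltac:(lia).
  rewrite /Prop5 !(G_rec _ _ n.+2) Gs0 Gs1 Gs2 GsO GsK I0 I1 I2 IO IK
     Gs0 Gs1 Gs2 GsO GsK J0 J1 J2 JO JK (binS n.+2 a) natrD.
  have Hrel := mul_bin_left n.+2 a.
  rewrite (_ : (n.+2 - a = b.+1)%N) in Hrel; last by lia.
  have H := congr1 (fun m => m%:R : rat) Hrel; rewrite /= !natrM in H.
  have HA : (a.+1%:R : rat) != 0 by rewrite pnatr_eq0.
  have Hy : ('C(n.+2, a.+1)%:R : rat) = 'C(n.+2,a)%:R * b.+1%:R / a.+1%:R.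
    by rewrite -[LHS](mulKf HA) H; ring.
  rewrite Hy.
  rewrite /fw /f2 /fK /f1 /fO.
  have Ha : 0 <= a%:R :> rat by apply: ler0n.
  have Hb : 0 <= b%:R :> rat by apply: ler0n.
  have Hs : 1 <= a%:R + b%:R :> rat by rewrite -natrD ler1n; lia.
  by case: c => /=; split; rewrite -?natr1; field; nz.
Qed.

Lemma sum_top (H : seq bool -> rat) h m a :
  (forall d s, H (d :: s) = h (ch d s)) ->
  \sum_(s <- arr m.+1 a.+1) H s = G h true m a + G h false m a.+1.
Proof.
move=> E; rewrite /= big_cat !big_map /G; congr (_ + _); apply: eq_bigr => s _; exact: E.
Qed.

Lemma ch_split k : (k%:R : rat) = (odd k)%:R + 2 * (k./2)%:R.
Proof. by rewrite -{1}(odd_double_half k) natrD -muln2 natrM mulrC. Qed.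

Lemma RM_L d s : (RM (d :: s))%:R = L 1 (1/2) 0 (-(1/2)) 0 (ch d s) :> rat.
Proof.
rewrite RM_cons /L (ch_split (ch d s)); move: (odd _) (_./2) => o h.
rewrite -natr1; case: o => /=; field; nz.
Qed.

Lemma RM2_L d s :
  ((RM (d :: s)) ^ 2)%:R = L 1 1 (1/4) (-(3/4)) (-(1/2)) (ch d s) :> rat.
Proof.
rewrite natrX RM_cons /L (ch_split (ch d s)); move: (odd _) (_./2) => o h.
rewrite -natr1; case: o => /=; field; nz.
Qed.

Lemma key a b (X : seq bool -> nat) h :
  (forall d s, (X (d :: s))%:R = h (ch d s)) ->
  E_unif a.+1 b.+1 X =
  (G h true (a + b.+1) a + G h false (a + b.+1) a.+1) /
  (G h0 true (a + b.+1) a + G h0 false (a + b.+1) a.+1).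
Proof.
move=> E; rewrite /E_unif; congr (_ / _).
  apply: etrans; first exact: (sum_arr a.+1 b.+1 (fun s => (X s)%:R)).
  by rewrite addSn (sum_top _ h).
have -> : (#|arrangements a.+1 b.+1|)%:R = \sum_(t in arrangements a.+1 b.+1) (1 : rat).
  by rewrite sumr_const.
apply: etrans; first exact: (sum_arr a.+1 b.+1 (fun _ => 1)).
by rewrite addSn (sum_top _ h0).
Qed.

Theorem theorem1 (n1 n2 : nat) (h1 : (1 <= n1)%N) (h2 : (1 <= n2)%N) :
  let n : rat := (n1 + n2)%:R in
  let a : rat := n1%:R in
  let b : rat := n2%:R in
  E_unif n1 n2 RM = 2 + (n * (a - 1) * (b - 1) - 2 * a * b) / (n * (n - 1))
  /\
  Var_unif n1 n2 RM =
    a * b * (a ^+ 3 + b ^+ 3 + a ^+ 3 * b + a * b ^+ 3 - a ^+ 2 - b ^+ 2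
             + 2 * a ^+ 2 * b ^+ 2 - 5 * a ^+ 2 * b - 5 * a * b ^+ 2
             + 6 * a * b)
    / (n ^+ 2 * (n - 1) ^+ 2 * (n - 2)).
Proof.
cbv zeta.
case: n1 h1 => [|a] // _; case: n2 h2 => [|b] // _.
rewrite /Var_unif (@key a b RM _ RM_L) (@key a b (fun s => (RM s ^ 2)%N) _ RM2_L) !G_L.
have [I0 I1 I2 IO IK] := @closed _ a b.+1 true (erefl _).
have [J0 J1 J2 JO JK] := @closed _ a.+1 b false (addSnnS _ _).
rewrite I0 I1 I2 IO IK J0 J1 J2 JO JK.
have [Hz|Hp] : (a + b = 0)%N \/ (1 <= a + b)%N by lia.
  have -> : a = 0%N by lia.
  have -> : b = 0%N by lia.
  by split; apply/eqP; vm_compute.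
have Hrel := mul_bin_left (a + b.+1) a.
rewrite (_ : (a + b.+1 - a = b.+1)%N) in Hrel; last by lia.
have H := congr1 (fun m => m%:R : rat) Hrel; rewrite /= !natrM in H.
have HA : (a.+1%:R : rat) != 0 by rewrite pnatr_eq0.
have Hy : ('C(a + b.+1, a.+1)%:R : rat) = 'C(a + b.+1, a)%:R * b.+1%:R / a.+1%:R.
  by rewrite -[LHS](mulKf HA) H; ring.
have Hx : 0 < ('C(a + b.+1, a)%:R : rat) by rewrite ltr0n bin_gt0; lia.
rewrite Hy.
rewrite /fw /f2 /fK /f1 /fO.
have Ha : 0 <= a%:R :> rat by apply: ler0n.
have Hb : 0 <= b%:R :> rat by apply: ler0n.
have Hs : 1 <= a%:R + b%:R :> rat by rewrite -natrD ler1n; lia.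
rewrite ?natrD -?natr1.
split; field; rewrite ?andbT; repeat (apply/andP; split);
  rewrite -?mulrDr; try (apply: mulf_neq0; first exact: lt0r_neq0); apply: lt0r_neq0; lra.
Qed.
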